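(* Let $(H;\langle\cdot,\cdot\rangle)$ be a real inner product space and let $\{e_i\}_{i\in I}$, $\{f_j\}_{j\in J}$ be two finite orthonormal families in $H$. Let $(H_{\mathbb{C}};\langle\cdot,\cdot\rangle_{\mathbb{C}})$ be the complexification of $H$. Then for any $w\in H_{\mathbb{C}}$, setting $$T(w):=\sum_{i\in I}\langle w,e_i\rangle_{\mathbb{C}}^2+\sum_{j\in J}\langle w,f_j\rangle_{\mathbb{C}}^2-2\sum_{i\in I,\,j\in J}\langle w,e_i\rangle_{\mathbb{C}}\langle w,f_j\rangle_{\mathbb{C}}\langle e_i,f_j\rangle,$$ we have $$|T(w)|\le\frac12|\langle w,\bar w\rangle_{\mathbb{C}}|+\left|T(w)-\frac12\langle w,\bar w\rangle_{\mathbb{C}}\right|\le\frac12\Big[\|w\|_{\mathbb{C}}^2+|\langle w,\bar w\rangle_{\mathbb{C}}|\Big]\le\|w\|_{\mathbb{C}}^2.$$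
   Context: The complexification $H_{\mathbb{C}}$ of a real inner product space $H$ is the set $H\times H$ of pairs $(x,y)$ (written $x+iy$) with $(x,y)+(x',y')=(x+x',y+y')$ and $(\sigma+i\tau)(x,y)=(\sigma x-\tau y,\tau x+\sigma y)$ for $\sigma,\tau\in\mathbb{R}$, and with inner product $\langle (x,y),(x',y')\rangle_{\mathbb{C}}=\langle x,x'\rangle+\langle y,y'\rangle+i[\langle x',y\rangle-\langle x,y'\rangle]$, so $\|(x,y)\|_{\mathbb{C}}^2=\|x\|^2+\|y\|^2$. The conjugate of $w=(x,y)$ is $\bar w=(x,-y)$. A vector $e\in H$ is identified with $(e,0)\in H_{\mathbb{C}}$, so $\langle w,e_i\rangle_{\mathbb{C}}=\langle w,(e_i,0)\rangle_{\mathbb{C}}$; $\langle e_i,f_j\rangle$ is the real inner product in $H$. A family $\{e_i\}$ is orthonormal if $\langle e_i,e_j\rangle=\delta_{ij}$. *)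

(* Defs.v *)
From HB Require Import structures.
From mathcomp Require Import all_boot all_order all_algebra.
From mathcomp Require Import reals.
From mathcomp Require Import complex.
Set Implicit Arguments. Unset Strict Implicit. Unset Printing Implicit Defensive.
Import Order.TTheory GRing.Theory Num.Theory.
Local Open Scope ring_scope.

Definition is_inner_product (R : realType) (V : lmodType R) (ip : V -> V -> R) :=
  [/\ (forall x y, ip x y = ip y x),
      (forall a x y z, ip (a *: x + y) z = a * ip x z + ip y z),
      (forall x, 0 <= ip x x) &
      (forall x, ip x x = 0 -> x = 0)].

Definition orthonormal_family (R : realType) (V : lmodType R) (ip : V -> V -> R)
  (I : finType) (e : I -> V) :=
  forall i j, ip (e i) (e j) = (i == j)%:R.

(* Complexification H_C = H x H; the pair (x, y) stands for x + i y. *)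
Definition cplx (V : Type) := (V * V)%type.

Definition embC (R : realType) (V : lmodType R) (e : V) : cplx V := (e, 0).

Definition conjH (R : realType) (V : lmodType R) (w : cplx V) : cplx V :=
  (w.1, - w.2).

Definition ipC (R : realType) (V : lmodType R) (ip : V -> V -> R)
  (w w' : cplx V) : R[i] :=
  Complex (ip w.1 w'.1 + ip w.2 w'.2) (ip w'.1 w.2 - ip w.1 w'.2).

Definition normC2 (R : realType) (V : lmodType R) (ip : V -> V -> R)
  (w : cplx V) : R := ip w.1 w.1 + ip w.2 w.2.

Definition Tq (R : realType) (V : lmodType R) (ip : V -> V -> R)
  (I J : finType) (e : I -> V) (f : J -> V) (w : cplx V) : R[i] :=
  \sum_(i : I) ipC ip w (embC (e i)) ^+ 2 + \sum_(j : J) ipC ip w (embC (f j)) ^+ 2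
  - 2 * \sum_(i : I) \sum_(j : J)
      ipC ip w (embC (e i)) * ipC ip w (embC (f j)) * Complex (ip (e i) (f j)) 0.

(* Main.v *)
Require Import Defs.
From HB Require Import structures.
From mathcomp Require Import all_boot all_order all_algebra.
From mathcomp Require Import reals.
From mathcomp Require Import complex.
From mathcomp Require Import ring lra.
Import Order.TTheory GRing.Theory Num.Theory.
Local Open Scope ring_scope.
Local Notation Re := complex.Re.
Local Notation Im := complex.Im.

Section Aux.
Variables (R : realType) (V : lmodType R) (ip : V -> V -> R).
Hypothesis Hip : is_inner_product ip.

Lemma ipS x y : ip x y = ip y x.
Proof. by case: Hip => h _ _ _; apply: h. Qed.
Lemma ipZDl a x y z : ip (a *: x + y) z = a * ip x z + ip y z.
Proof. by case: Hip => _ h _ _; apply: h. Qed.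
Lemma ip_ge0 x : 0 <= ip x x.
Proof. by case: Hip => _ _ h _; apply: h. Qed.
Lemma ip_eq0 x : ip x x = 0 -> x = 0.
Proof. by case: Hip => _ _ _ h; exact: h. Qed.
Lemma ip0l z : ip 0 z = 0.
Proof. have := ipZDl 1 0 0 z. rewrite scaler0 addr0 mul1r. lra. Qed.
Lemma ip0r z : ip z 0 = 0.
Proof. by rewrite ipS ip0l. Qed.
Lemma ipDl x y z : ip (x + y) z = ip x z + ip y z.
Proof. by rewrite -[x]scale1r ipZDl mul1r scale1r. Qed.
Lemma ipZl a x z : ip (a *: x) z = a * ip x z.
Proof. by rewrite -[a *: x]addr0 ipZDl ip0l addr0. Qed.
Lemma ipNl x z : ip (- x) z = - ip x z.
Proof. by rewrite -scaleN1r ipZl mulN1r. Qed.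
Lemma ipBl x y z : ip (x - y) z = ip x z - ip y z.
Proof. by rewrite ipDl ipNl. Qed.
Lemma ipDr x y z : ip z (x + y) = ip z x + ip z y.
Proof. by rewrite ipS ipDl !(ipS z). Qed.
Lemma ipZr a x z : ip z (a *: x) = a * ip z x.
Proof. by rewrite ipS ipZl (ipS z). Qed.
Lemma ipNr x z : ip z (- x) = - ip z x.
Proof. by rewrite ipS ipNl (ipS z). Qed.
Lemma ipBr x y z : ip z (x - y) = ip z x - ip z y.
Proof. by rewrite ipDr ipNr. Qed.

Lemma ip_suml (K : finType) (F : K -> V) v :
  ip (\sum_k F k) v = \sum_k ip (F k) v.
Proof. exact: (big_morph (fun x => ip x v) (fun x y => ipDl x y v) (ip0l v)). Qed.
Lemma ip_sumr (K : finType) (F : K -> V) v :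
  ip v (\sum_k F k) = \sum_k ip v (F k).
Proof. exact: (big_morph (fun x => ip v x) (fun x y => ipDr x y v) (ip0r v)). Qed.

Lemma CS2 a b x y :
  (ip a x - ip b y) ^+ 2 + (ip a y + ip b x) ^+ 2
   <= (ip a a + ip b b) * (ip x x + ip y y).
Proof.
have hx := ip_ge0 x; have hy := ip_ge0 y.
have [n0|npos] : ip x x + ip y y = 0 \/ 0 < ip x x + ip y y.
  by case: (ltgtP (ip x x + ip y y) 0) => h; [lra | right | left].
- have x0 : x = 0 by apply: ip_eq0; lra.
  have y0 : y = 0 by apply: ip_eq0; lra.
  rewrite x0 y0 !ip0r ?ip0l ?mulr0 ?addr0 ?expr0n /=; lra.
set n := ip x x + ip y y.
set p := ip a x - ip b y; set q := ip a y + ip b x.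
have H : 0 <= ip (n *: a - p *: x - q *: y) (n *: a - p *: x - q *: y)
          + ip (n *: b + p *: y - q *: x) (n *: b + p *: y - q *: x).
  by apply: addr_ge0; apply: ip_ge0.
have E : ip (n *: a - p *: x - q *: y) (n *: a - p *: x - q *: y)
          + ip (n *: b + p *: y - q *: x) (n *: b + p *: y - q *: x)
       = n * (n * (ip a a + ip b b) - (p ^+ 2 + q ^+ 2)).
  rewrite !(ipBl, ipDl, ipZl, ipBr, ipDr, ipZr).
  rewrite (ipS x a) (ipS y a) (ipS x b) (ipS y b) (ipS y x).
  rewrite /p /q /n; ring.
rewrite E in H.
have := H; rewrite pmulr_rge0 //; lra.
Qed.

Definition proj (K : finType) (e : K -> V) v := \sum_k ip v (e k) *: e k.
Arguments proj {K}.

Lemma projip (K : finType) (e : K -> V) a b :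
  ip (proj e a) b = \sum_k ip a (e k) * ip b (e k).
Proof.
rewrite /proj ip_suml; apply: eq_bigr => k _; by rewrite ipZl (ipS (e k)).
Qed.

Lemma proj_e (K : finType) (e : K -> V) a k : orthonormal_family ip e ->
  ip (proj e a) (e k) = ip a (e k).
Proof.
move=> He; rewrite projip (bigD1 k) //= big1 ?addr0.
  by rewrite He eqxx mulr1.
by move=> l /negPf lk; rewrite He eq_sym lk mulr0.
Qed.

Lemma projPP (K : finType) (e : K -> V) a b : orthonormal_family ip e ->
  ip (proj e a) (proj e b) = ip (proj e a) b.
Proof.
move=> He; rewrite !projip; apply: eq_bigr => k _.
by rewrite proj_e.
Qed.

Lemma projD (K : finType) (e : K -> V) u v : proj e (u + v) = proj e u + proj e v.
Proof.
rewrite /proj -big_split /=; apply: eq_bigr => k _; by rewrite ipDl scalerDl.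
Qed.

Lemma bessel (K : finType) (e : K -> V) a : orthonormal_family ip e ->
  ip (proj e a) a <= ip a a.
Proof.
move=> He; have := ip_ge0 (a - proj e a).
rewrite !(ipBl, ipBr) projPP // (ipS a (proj e a)); lra.
Qed.

Lemma proj_ge0 (K : finType) (e : K -> V) a : orthonormal_family ip e ->
  0 <= ip (proj e a) a.
Proof. by move=> He; rewrite -projPP //; apply: ip_ge0. Qed.

Section DSec.
Variables (I J : finType) (e : I -> V) (f : J -> V).
Hypotheses (He : orthonormal_family ip e) (Hf : orthonormal_family ip f).

Definition D v := proj e v - proj f v.

Lemma Dsym u v : ip (D u) v = ip u (D v).
Proof.
rewrite /D ipBl ipBr (ipS u (proj e v)) (ipS u (proj f v)) !projip.
by congr (_ - _); apply: eq_bigr => k _; apply: mulrC.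
Qed.

Lemma Dnorm v : ip (D v) (D v) <= ip v v.
Proof.
set w := proj f v; set z := v - w.
have vE : v = z + w by rewrite /z subrK.
have Dv : D v = proj e z + proj e w - w by rewrite /D -/w {1}vE projD.
have h1 : ip (proj e z) (proj e w) = ip (proj e z) w by rewrite projPP.
have h2 : ip (proj e w) (proj e w) = ip (proj e w) w by rewrite projPP.
have h3 : ip (proj e z) (proj e z) = ip (proj e z) z by rewrite projPP.
have h4 : ip (proj e z) z <= ip z z by apply: bessel.
have h5 : 0 <= ip (proj e w) w by apply: proj_ge0.
have h6 : ip z w = 0.
  rewrite /z ipBl; have : ip w w = ip w v by rewrite /w projPP.
  rewrite (ipS v w); lra.
clearbody z.
have h7 : ip v v = ip z z + 2 * ip z w + ip w w.
  rewrite {1 2}vE !(ipDl, ipDr). rewrite ?(ipS w z). lra.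
rewrite Dv !(ipDl, ipDr, ipBl, ipBr, ipNl, ipNr).
rewrite ?(ipS (proj e w) (proj e z)) ?(ipS w (proj e z)) ?(ipS w (proj e w)).
lra.
Qed.

Lemma DD u v : ip (D u) (D v) =
  \sum_i ip u (e i) * ip v (e i) + \sum_j ip u (f j) * ip v (f j)
  - \sum_i \sum_j (ip u (e i) * ip v (f j) + ip v (e i) * ip u (f j)) * ip (e i) (f j).
Proof.
have cross : ip (proj e u) (proj f v) + ip (proj f u) (proj e v) =
  \sum_i \sum_j (ip u (e i) * ip v (f j) + ip v (e i) * ip u (f j)) * ip (e i) (f j).
  rewrite (ipS (proj f u)) !projip -big_split /=; apply: eq_bigr => i _.
  rewrite !projip !mulr_sumr -big_split /=.
  apply: eq_bigr => j _; ring.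
rewrite /D !(ipBl, ipBr) (projPP _ e _ _ He) (projPP _ f _ _ Hf) (projip _ e u v) (projip _ f u v) -cross.
lra.
Qed.

Lemma Lform (x y v : V) : ipC ip (x, y) (embC v) = Complex (ip x v) (ip y v).
Proof. by rewrite /ipC /embC /= !ip0r (ipS v y) subr0 addr0. Qed.

Lemma ReD (a b : R[i]) : Re (a + b) = Re a + Re b. Proof. by case: a => ? ?; case: b => ? ? /=. Qed.
Lemma ImD (a b : R[i]) : Im (a + b) = Im a + Im b. Proof. by case: a => ? ?; case: b => ? ? /=. Qed.
Lemma ReN (a : R[i]) : Re (- a) = - Re a. Proof. by case: a => ? ? /=. Qed.
Lemma ImN (a : R[i]) : Im (- a) = - Im a. Proof. by case: a => ? ? /=. Qed.
Lemma Re0 : Re (0 : R[i]) = 0. Proof. by []. Qed.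
Lemma Im0 : Im (0 : R[i]) = 0. Proof. by []. Qed.
Lemma ReM2 (a : R[i]) : Re (2 * a) = 2 * Re a.
Proof. case: a => p q /=. ring. Qed.
Lemma ImM2 (a : R[i]) : Im (2 * a) = 2 * Im a.
Proof. case: a => p q /=. ring. Qed.
Lemma Re_sum (K : finType) (F : K -> R[i]) : Re (\sum_k F k) = \sum_k Re (F k).
Proof. exact: (big_morph _ ReD Re0). Qed.
Lemma Im_sum (K : finType) (F : K -> R[i]) : Im (\sum_k F k) = \sum_k Im (F k).
Proof. exact: (big_morph _ ImD Im0). Qed.

Lemma T_form x y : Tq ip e f (x, y) =
  Complex (ip (D x) (D x) - ip (D y) (D y)) (2 * ip (D x) (D y)).
Proof.
have zE : forall z : R[i], z = Complex (Re z) (Im z) by case.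
rewrite [LHS]zE; congr Complex; rewrite /Tq !DD.
- have hA : forall (K : finType) (g : K -> V),
     Re (\sum_k ipC ip (x, y) (embC (g k)) ^+ 2) =
     \sum_k ip x (g k) * ip x (g k) - \sum_k ip y (g k) * ip y (g k).
    move=> K g; rewrite Re_sum -sumrB; apply: eq_bigr => k _.
    by rewrite Lform expr2 /=; ring.
  have hC : 2 * Re (\sum_i \sum_j ipC ip (x, y) (embC (e i)) *
                 ipC ip (x, y) (embC (f j)) * Complex (ip (e i) (f j)) 0) =
     \sum_i \sum_j (ip x (e i) * ip x (f j) + ip x (e i) * ip x (f j)) * ip (e i) (f j)
     - \sum_i \sum_j (ip y (e i) * ip y (f j) + ip y (e i) * ip y (f j)) * ip (e i) (f j).
    rewrite Re_sum mulr_sumr -sumrB; apply: eq_bigr => i _.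
    rewrite Re_sum mulr_sumr -sumrB; apply: eq_bigr => j _.
    by rewrite !Lform /=; ring.
  rewrite !ReD ReN ReM2 hA hA hC; lra.
- have iA : forall (K : finType) (g : K -> V),
     Im (\sum_k ipC ip (x, y) (embC (g k)) ^+ 2) =
     2 * \sum_k ip x (g k) * ip y (g k).
    move=> K g; rewrite Im_sum mulr_sumr; apply: eq_bigr => k _.
    by rewrite Lform expr2 /=; ring.
  have iC : Im (\sum_i \sum_j ipC ip (x, y) (embC (e i)) *
                 ipC ip (x, y) (embC (f j)) * Complex (ip (e i) (f j)) 0) =
     \sum_i \sum_j (ip x (e i) * ip y (f j) + ip y (e i) * ip x (f j)) * ip (e i) (f j).
    rewrite Im_sum; apply: eq_bigr => i _.
    rewrite Im_sum; apply: eq_bigr => j _.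
    by rewrite !Lform /=; ring.
  rewrite !ImD ImN ImM2 iA iA iC; lra.
Qed.

Lemma c_form x y : ipC ip (x, y) (conjH (x, y)) =
  Complex (ip x x - ip y y) (2 * ip x y).
Proof. rewrite /ipC /conjH /= !ipNr; congr Complex; lra. Qed.

Lemma half_form (a b : R) : Complex a b / 2 = Complex (a / 2) (b / 2).
Proof.
have h2 : (2 : R[i]) != 0 by rewrite pnatr_eq0.
have -> : Complex a b = Complex (a / 2) (b / 2) * 2.
  by rewrite /=; congr Complex; field.
by rewrite mulfK.
Qed.

Lemma sqrt_le (s t : R) : 0 <= t -> s <= t ^+ 2 -> Num.sqrt s <= t.
Proof.
move=> t0 st; rewrite -(ger0_norm t0) -sqrtr_sqr; exact: ler_wsqrtr.
Qed.

Lemma normc2 : Normc.normc (2 : R[i]) = 2.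
Proof. rewrite /= addr0 expr0n /= addr0 sqrtr_sqr ger0_norm //; lra. Qed.


Lemma main x y :
    let T := Tq ip e f (x, y) in
    let c := ipC ip (x, y) (conjH (x, y)) in
    [/\ Normc.normc T <= Normc.normc c / 2 + Normc.normc (T - c / 2),
        Normc.normc c / 2 + Normc.normc (T - c / 2) <= (normC2 ip (x, y) + Normc.normc c) / 2 &
        (normC2 ip (x, y) + Normc.normc c) / 2 <= normC2 ip (x, y)].
Proof.
move=> T c.
have n2 : Normc.normc (c / 2) = Normc.normc c / 2.
  by rewrite Normc.normcM Normc.normcV normc2.
have hx := ip_ge0 x; have hy := ip_ge0 y.
have Nn : normC2 ip (x, y) = ip x x + ip y y by [].
have B2 : Normc.normc (T - c / 2) <= (ip x x + ip y y) / 2.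
  rewrite /T /c T_form c_form half_form /=.
  apply: sqrt_le; first lra.
  set Mx := D (D x) - 2^-1 *: x; set My := D (D y) - 2^-1 *: y.
  have hMx : ip Mx x = ip (D x) (D x) - ip x x / 2.
    by rewrite /Mx ipBl ipZl Dsym mulrC.
  have hMy : ip My y = ip (D y) (D y) - ip y y / 2.
    by rewrite /My ipBl ipZl Dsym mulrC.
  have hMxy : ip Mx y = ip (D x) (D y) - ip x y / 2.
    by rewrite /Mx ipBl ipZl Dsym mulrC.
  have hMyx : ip My x = ip (D x) (D y) - ip x y / 2.
    by rewrite /My ipBl ipZl Dsym mulrC (ipS (D y)) (ipS y x).
  have nM : forall z, ip (D (D z) - 2^-1 *: z) (D (D z) - 2^-1 *: z) <= ip z z / 4.
    move=> z; have h := Dnorm (D z); have s := Dsym (D z) z.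
    move: h s; set u := D (D z); set w := D z; clearbody u w => h s.
    rewrite !(ipBl, ipBr, ipZl, ipZr) (ipS z u).
    lra.
  have hMM : ip Mx Mx <= ip x x / 4 by apply: nM.
  have hMM' : ip My My <= ip y y / 4 by apply: nM.
  have cs := CS2 Mx My x y.
  rewrite hMx hMy hMxy hMyx in cs.
  have hP : 0 <= ip Mx Mx + ip My My by apply: addr_ge0; apply: ip_ge0.
  have : (ip Mx Mx + ip My My) * (ip x x + ip y y) <=
         (ip x x / 4 + ip y y / 4) * (ip x x + ip y y).
    by apply: ler_wpM2r; [lra | lra].
  move=> h.
  lra.
have B3 : Normc.normc c <= ip x x + ip y y.
  rewrite /c c_form /=; apply: sqrt_le; first lra.
  have cs := CS2 y 0 x y; rewrite !ip0l (ipS y x) in cs.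
  lra.
split.
- have := lec_normD (c / 2) (T - c / 2).
  rewrite addrC subrK n2 /=.
  by move=> /andP[_ ].
- rewrite Nn; lra.
- rewrite Nn; lra.
Qed.
End DSec.
End Aux.

Theorem theorem3p1 (R : realType) (V : lmodType R) (ip : V -> V -> R)
  (I J : finType) (e : I -> V) (f : J -> V) :
  is_inner_product ip ->
  orthonormal_family ip e -> orthonormal_family ip f ->
  forall w : cplx V,
    let T := Tq ip e f w in
    let c := ipC ip w (conjH w) in
    [/\ Normc.normc T <= Normc.normc c / 2 + Normc.normc (T - c / 2),
        Normc.normc c / 2 + Normc.normc (T - c / 2) <= (normC2 ip w + Normc.normc c) / 2 &
        (normC2 ip w + Normc.normc c) / 2 <= normC2 ip w].
Proof.
move=> Hip He Hf [x y].
exact: (@main R V ip Hip I J e f He Hf x y).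
Qed.
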